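(* Let $q\ge2$ and $n\ge3$ be integers, and let $\mathcal{A}\subseteq\mathcal{N}_{q,n}$ with $|\mathcal{A}|\ge3^{q-1}$. Then $$\min_{\mathbf{t},\mathbf{t}'\in\mathcal{A},\ \mathbf{t}\ne\mathbf{t}'}d_{\mathrm c}(\mathbf{t},\mathbf{t}')\le2(q-1)\frac{n}{|\mathcal{A}|^{1/(q-1)}}.$$
   Context: $\mathcal{N}_{q,n}=\{\mathbf{t}\in\mathbb{Z}_{\ge0}^q:\sum_{i=1}^qt_i=n\}$; $d_{\mathrm c}(\mathbf{t},\mathbf{t}')=\frac12\sum_{i=1}^q|t_i-t_i'|$. *)

(* Defs.v *)
From mathcomp Require Import all_boot.
From Stdlib Require Import Reals.
Set Implicit Arguments. Unset Strict Implicit. Unset Printing Implicit Defensive.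

Definition vec (q n : nat) := {ffun 'I_q -> 'I_n.+1}.

Definition in_N (q n : nat) (t : vec q n) : bool :=
  (\sum_(i < q) (t i : nat)) == n.

Definition l1dist (q n : nat) (t t' : vec q n) : nat :=
  \sum_(i < q) (((t i : nat) - t' i) + ((t' i : nat) - t i)).

Definition dc (q n : nat) (t t' : vec q n) : R :=
  (INR (l1dist t t') / 2)%R.

(* Main.v *)
Require Import Defs.
From mathcomp Require Import all_boot.
From Stdlib Require Import Reals Lia Lra.
From mathcomp Require Import zify.

Lemma sum_absdiff k (F G : 'I_k -> nat) :
  (\sum_(i < k) F i - \sum_(i < k) G i) + (\sum_(i < k) G i - \sum_(i < k) F i)
  <= \sum_(i < k) ((F i - G i) + (G i - F i)).
Proof.
elim: k F G => [|k IH] F G; first by rewrite !big_ord0.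
rewrite !big_ord_recr /=.
have := IH (fun i => F (widen_ord (leqnSn k) i)) (fun i => G (widen_ord (leqnSn k) i)) => /= H.
lia.
Qed.

Lemma div_eq_close a a' b : 0 < b -> a %/ b = a' %/ b -> (a - a') + (a' - a) <= b.-1.
Proof.
move=> b0 e.
have h1 := divn_eq a b. have h2 := divn_eq a' b.
have r1 := ltn_pmod a b0. have r2 := ltn_pmod a' b0.
rewrite e in h1. lia.
Qed.


Lemma powE a k : Nat.pow a k = expn a k.
Proof. by elim: k => [|k IH] //=; rewrite expnS IH. Qed.

Lemma le_expn s k : 0 < k -> s <= expn s k.
Proof.
case: k => // k _; rewrite expnS; case: s => // s; have := expn_gt0 s.+1 k; nia.
Qed.

Lemma final_real (k m s n l : nat) :
  (0 < k)%N -> (0 < s)%N -> (0 < m)%N -> (m <= expn s.+1 k)%N ->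
  (l <= 2 * (k * (n %/ s)))%N ->
  (INR l / 2 <= 2 * INR k * INR n / Rpower (INR m) (/ INR k))%R.
Proof.
move=> k0 s0 m0 msk hl.
set x := Rpower (INR m) (/ INR k).
have xpos : (0 < x)%R by rewrite /x /Rpower; apply: exp_pos.
have xle : (x <= INR s.+1)%R.
  have -> : INR s.+1 = Rpower (INR (expn s.+1 k)) (/ INR k).
    rewrite -powE pow_INR -Rpower_pow; last by apply: lt_0_INR; lia.
    rewrite Rpower_mult Rinv_r; first by rewrite Rpower_1 //; apply: lt_0_INR; lia.
    apply: not_0_INR; lia.
  apply: Rle_Rpower_l.
    left; apply: Rinv_0_lt_compat; apply: lt_0_INR; lia.
  split; [apply: lt_0_INR; lia| apply: le_INR; apply/leP; exact: msk].
have key : (k * (n %/ s) * s.+1 <= 2 * k * n)%N.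
  have := leq_divM n s. have := leq_div n s. nia.
have hl' : (INR l / 2 <= INR (k * (n %/ s)))%R.
  have : (INR l <= INR (2 * (k * (n %/ s))))%R by apply: le_INR; apply/leP.
  rewrite mult_INR /=. lra.
apply: (Rle_trans _ _ _ hl').
apply Rmult_le_reg_r with x => //.
rewrite /Rdiv Rmult_assoc Rinv_l; last lra.
rewrite Rmult_1_r.
apply: (Rle_trans _ (INR (k * (n %/ s)) * INR s.+1)).
  apply: Rmult_le_compat_l => //; apply: pos_INR.
rewrite -mult_INR.
have := le_INR _ _ (elimT leP key).
rewrite !mult_INR /=. lra.
Qed.

Theorem lemma17 (q n : nat) (A : {set vec q n}) :
  2 <= q -> 3 <= n ->
  {subset A <= [pred t | in_N t]} ->
  3 ^ (q - 1) <= #|A| ->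
  exists t t', [/\ t \in A, t' \in A, t != t' &
    (dc t t' <= 2 * INR (q - 1) * INR n
                / Rpower (INR #|A|) (/ INR (q - 1)))%R].
Proof.
case: q A => [|k] A q2 n3 AN Acard //.
rewrite subn1 /= powE in Acard *.
have k0 : 0 < k by lia.
have m2 : 1 < #|A|.
  apply: leq_trans Acard. case: (k) k0 => // k' _.
  rewrite expnS. have := expn_gt0 3 k'. lia.
pose P := fun s => expn s k < #|A|.
have exP : exists s, P s by exists 1; rewrite /P exp1n.
have ubP : forall s, P s -> s <= #|A|.
  move=> s; rewrite /P; have := @le_expn s k k0; lia.
case: (ex_maxnP exP ubP) => s Ps smax.
have s1 : 1 <= s by apply: smax; rewrite /P exp1n.
have msk : #|A| <= expn s.+1 k.
  rewrite leqNgt; apply/negP => h; have := smax _ h; lia.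
case: s s1 Ps smax msk => // s' _ Ps smax msk.
have hdiv := divn_eq n s'.+1. have hmod := ltn_pmod n (ltn0Sn s').
have [d ed] : exists d, d = n %/ s'.+1 by eexists.
rewrite -ed in hdiv. move: (n %% s'.+1) hdiv hmod => r hdiv hmod.
have [b eb] : exists b, b = d + 1 by eexists.
have b0 : 0 < b by lia.
have nlt : n < s'.+1 * b by nia.
pose w := widen_ord (leqnSn k).
pose f := fun t : vec k.+1 n => [ffun i : 'I_k => (inord (t (w i) %/ b) : 'I_s'.+1)].
have : [exists t in A, exists t' in A, (t != t') && (f t == f t')].
  apply: contraT => /negP H; suff: False by [].
  have inj : {in A &, injective f}.
    move=> t t' tA t'A e; apply/eqP; apply: contraT => ne; exfalso; apply: H.
    apply/existsP; exists t; rewrite tA /=; apply/existsP; exists t'.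
    by rewrite t'A ne e eqxx.
  have := card_in_imset inj.
  have := max_card (f @: A). rewrite card_ffun !card_ord => h1 h2.
  rewrite h2 in h1. rewrite /P in Ps. lia.
case/existsP => t /andP [tA /existsP [t' /andP [t'A /andP [ne /eqP e]]]].
exists t, t'; split => //.
apply: (@final_real k #|A| s'.+1 n (l1dist t t')) => //; first lia.
rewrite -ed.
have dle : forall i : 'I_k, (t (w i) - t' (w i)) + (t' (w i) - t (w i)) <= d.
  move=> i.
  have ei : f t i = f t' i by rewrite e.
  rewrite /f !ffunE in ei.
  have lt1 : forall a : 'I_n.+1, a %/ b < s'.+1.
    move=> a; rewrite ltn_divLR //; have := ltn_ord a; lia.
  have := congr1 (@nat_of_ord _) ei. rewrite !inordK ?lt1 // => ediv.
  have := @div_eq_close _ _ b b0 ediv. rewrite eb addn1 /=. lia.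
have hsum : \sum_(i < k) ((t (w i) - t' (w i)) + (t' (w i) - t (w i))) <= k * d.
  apply: (@leq_trans (\sum_(i < k) d)); first by apply: leq_sum => i _; exact: dle.
  by rewrite big_const_ord iter_addn_0 mulnC.
have hN : (\sum_(i < k.+1) (t i : nat)) == n := AN t tA.
have hN' : (\sum_(i < k.+1) (t' i : nat)) == n := AN t' t'A.
rewrite big_ord_recr /= in hN.
rewrite big_ord_recr /= in hN'.
have := @sum_absdiff k (fun i => (t (w i) : nat)) (fun i => (t' (w i) : nat)).
rewrite /l1dist big_ord_recr /= -/w.
move/eqP: hN; move/eqP: hN' => hN' hN.
rewrite -/w in hN hN'. move=> /= H. set S1 := \sum_(i < k) (t (w i) : nat) in H hN *. set S2 := \sum_(i < k) (t' (w i) : nat) in H hN' *. set D := \sum_(i < k) _ in H hsum *. lia.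
Qed.
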